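(* For all integers $M,N\ge1$, $$d_4^2(M,N)=\beta_4^2(M,N)+\delta_{2|M}\,\frac{(M-2)(N-1)}{M^4N^3},$$ where $\delta_{2|M}=1$ if $M$ is even and $\delta_{2|M}=0$ if $M$ is odd, and $\beta_4^2(M,N)=\delta_4(M,N)+\frac1M(1-\delta_4(M,N))$.
   Context: For integers $M,N,p,r\ge1$, consider triples $(i,a,b)$ with $i\in\mathbb Z_M^r$, $a\in\mathbb Z_M^p$, $b\in\mathbb Z_N^p$, with cyclic conventions $i_{r+1}=i_1$, $b_{p+1}=b_1$. For $x\in\{1,\dots,r\}$, condition $(E_x)$ says that the multisets $\{(i_x+a_y,b_y),(i_{x+1}+a_y,b_{y+1}):y=1,\dots,p\}$ and $\{(i_x+a_y,b_{y+1}),(i_{x+1}+a_y,b_y):y=1,\dots,p\}$ of elements of $\mathbb Z_M\times\mathbb Z_N$ (counted with multiplicity) coincide. Define $d_p^r(M,N)=\frac{1}{M^{p+r}N^p}\#\{(i,a,b):(E_x)\text{ holds for all }x\}$ and $\delta_p(M,N)=\frac{1}{(MN)^p}\#\{(a,b)\in\mathbb Z_M^p\times\mathbb Z_N^p:\{(a_y,b_y)\}_{y=1}^p=\{(a_y,b_{y+1})\}_{y=1}^p\text{ as multisets}\}$. *)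

(* Defs.v *)
(* Z_M is modelled by 'I_M with addition mod M (valid for all M >= 1). *)
From HB Require Import structures.
From mathcomp Require Import all_boot all_order all_algebra.
Set Implicit Arguments. Unset Strict Implicit. Unset Printing Implicit Defensive.
Import Order.TTheory GRing.Theory Num.Theory.

(* Elements of Z_M x Z_N are represented as pairs of canonical residues (nat * nat);
   the cyclic successor of an index is [ordS]. Multisets = sequences up to perm_eq. *)
Definition condE (M N r p : nat) (i : {ffun 'I_r -> 'I_M}) (a : {ffun 'I_p -> 'I_M})
    (b : {ffun 'I_p -> 'I_N}) (x : 'I_r) : bool :=
  perm_eq
    (flatten [seq [:: ((i x + a y) %% M, val (b y));
                      ((i (ordS x) + a y) %% M, val (b (ordS y)))] | y <- enum 'I_p])
    (flatten [seq [:: ((i x + a y) %% M, val (b (ordS y)));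
                      ((i (ordS x) + a y) %% M, val (b y))] | y <- enum 'I_p]).

Definition count_d (M N p r : nat) : nat :=
  #|[set t : {ffun 'I_r -> 'I_M} * {ffun 'I_p -> 'I_M} * {ffun 'I_p -> 'I_N}
       | [forall x : 'I_r, condE t.1.1 t.1.2 t.2 x]]|.

Definition d_pr (p r M N : nat) : rat :=
  (count_d M N p r)%:R / ((M ^ (p + r) * N ^ p)%N)%:R.

Definition count_delta (M N p : nat) : nat :=
  #|[set t : {ffun 'I_p -> 'I_M} * {ffun 'I_p -> 'I_N}
       | perm_eq [seq (val (t.1 y), val (t.2 y)) | y <- enum 'I_p]
                 [seq (val (t.1 y), val (t.2 (ordS y))) | y <- enum 'I_p]]|.

Definition delta_p (p M N : nat) : rat :=
  (count_delta M N p)%:R / ((M * N) ^ p)%N%:R.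

Definition beta_p2 (p M N : nat) : rat :=
  delta_p p M N + (M%:R)^-1 * (1 - delta_p p M N).

(* Main.v *)
Require Import Defs.
From HB Require Import structures.
From mathcomp Require Import all_boot all_order all_algebra.
From mathcomp Require Import zify.
From Stdlib Require Import Classical.
Lemma modM2 x M : x < M + M -> x %% M = if x < M then x else x - M.
Proof.
case: ifP => h1 h2; first by rewrite modn_small.
have -> : x = (x - M) + M by lia.
rewrite modnDr modn_small; lia.
Qed.
Lemma addmod x e M : x < M -> e < M -> (x + e) %% M = if x + e < M then x + e else x + e - M.
Proof. move=> *; apply: modM2; lia. Qed.
Lemma shift_ne M e c : 0 < e -> e < M -> c < M -> (c + e) %% M <> c.
Proof. move=> *; rewrite addmod //; case: ifP; lia. Qed.
Lemma invol M e c : e.*2 = M -> c < M -> ((c + e) %% M + e) %% M = c.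
Proof. move=> he hc. have eM : e < M by lia.
rewrite (@addmod c e M hc eM); case: ifP => h; rewrite modM2; try case: ifP; lia. Qed.
Lemma shift2_ne M e c : 0 < e -> e < M -> e.*2 != M -> c < M -> ((c + e) %% M + e) %% M <> c.
Proof. move=> h0 eM h2 hc. move/eqP: h2 => h2.
rewrite (@addmod c e M hc eM); case: ifP => h; rewrite modM2; try case: ifP; lia. Qed.
Definition f3 (x0 x1 x2 x3 y0 y1 y2 y3 u0 u1 u2 u3 z0 z1 z2 z3 : bool) : bool :=
  [&& ~~(x0 && y0), ~~(x1 && y1), ~~(x2 && y2) & ~~(x3 && y3)] ==>
  [&& ~~(x0 && u0), ~~(x1 && u1), ~~(x2 && u2) & ~~(x3 && u3)] ==>
  [&& ~~(u0 && y0), ~~(u1 && y1), ~~(u2 && y2) & ~~(u3 && y3)] ==>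
  ((x0 && z1) + (x1 && z2) + (x2 && z3) + (x3 && z0) < (x0 && z0) + (x1 && z1) + (x2 && z2) + (x3 && z3)) ==>
  ((y0 && z1) + (y1 && z2) + (y2 && z3) + (y3 && z0) < (y0 && z0) + (y1 && z1) + (y2 && z2) + (y3 && z3)) ==>
  ((u0 && z1) + (u1 && z2) + (u2 && z3) + (u3 && z0) < (u0 && z0) + (u1 && z1) + (u2 && z2) + (u3 && z3)) ==> false.
Definition allb (P : bool -> bool) := P true && P false.
Lemma allbP P : allb P -> forall b, P b. Proof. by case/andP => ? ? []. Qed.
Lemma f3_all : allb (fun x0 => allb (fun x1 => allb (fun x2 => allb (fun x3 =>
  allb (fun y0 => allb (fun y1 => allb (fun y2 => allb (fun y3 =>
  allb (fun u0 => allb (fun u1 => allb (fun u2 => allb (fun u3 =>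
  allb (fun z0 => allb (fun z1 => allb (fun z2 => allb (fun z3 =>
  f3 x0 x1 x2 x3 y0 y1 y2 y3 u0 u1 u2 u3 z0 z1 z2 z3)))))))))))))))).
Proof. by vm_compute. Qed.
Lemma patt3 x0 x1 x2 x3 y0 y1 y2 y3 u0 u1 u2 u3 z0 z1 z2 z3 :
  f3 x0 x1 x2 x3 y0 y1 y2 y3 u0 u1 u2 u3 z0 z1 z2 z3.
Proof.
by move: f3_all => /allbP/(_ x0)/allbP/(_ x1)/allbP/(_ x2)/allbP/(_ x3)/allbP/(_ y0)/allbP/(_ y1)/allbP/(_ y2)/allbP/(_ y3)/allbP/(_ u0)/allbP/(_ u1)/allbP/(_ u2)/allbP/(_ u3)/allbP/(_ z0)/allbP/(_ z1)/allbP/(_ z2)/allbP/(_ z3).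
Qed.

Definition f2 (x0 x1 x2 x3 y0 y1 y2 y3 z0 z1 z2 z3 : bool) : bool :=
  [&& ~~(x0 && y0), ~~(x1 && y1), ~~(x2 && y2) & ~~(x3 && y3)] ==>
  ((x0 && z1) + (x1 && z2) + (x2 && z3) + (x3 && z0) < (x0 && z0) + (x1 && z1) + (x2 && z2) + (x3 && z3)) ==>
  ((y0 && z1) + (y1 && z2) + (y2 && z3) + (y3 && z0) < (y0 && z0) + (y1 && z1) + (y2 && z2) + (y3 && z3)) ==>
  ([&& z0, ~~z1, z2, ~~z3 & [&& (x0 && y2) || (y0 && x2), ~~x1, ~~y1, ~~x3 & ~~y3]]
  || [&& ~~z0, z1, ~~z2, z3 & [&& (x1 && y3) || (y1 && x3), ~~x0, ~~y0, ~~x2 & ~~y2]]).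
Lemma f2_all : allb (fun x0 => allb (fun x1 => allb (fun x2 => allb (fun x3 =>
  allb (fun y0 => allb (fun y1 => allb (fun y2 => allb (fun y3 =>
  allb (fun z0 => allb (fun z1 => allb (fun z2 => allb (fun z3 =>
  f2 x0 x1 x2 x3 y0 y1 y2 y3 z0 z1 z2 z3)))))))))))).
Proof. by vm_compute. Qed.
Lemma patt x0 x1 x2 x3 y0 y1 y2 y3 z0 z1 z2 z3 :
  f2 x0 x1 x2 x3 y0 y1 y2 y3 z0 z1 z2 z3.
Proof.
by move: f2_all => /allbP/(_ x0)/allbP/(_ x1)/allbP/(_ x2)/allbP/(_ x3)/allbP/(_ y0)/allbP/(_ y1)/allbP/(_ y2)/allbP/(_ y3)/allbP/(_ z0)/allbP/(_ z1)/allbP/(_ z2)/allbP/(_ z3).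
Qed.

Definition Pf (a0 a1 a2 a3 b0 b1 b2 b3 c w : nat) : nat :=
  ((a0 == c) && (b0 == w)) + ((a1 == c) && (b1 == w)) + ((a2 == c) && (b2 == w)) + ((a3 == c) && (b3 == w)).
Definition Qf (a0 a1 a2 a3 b0 b1 b2 b3 c w : nat) : nat :=
  ((a0 == c) && (b1 == w)) + ((a1 == c) && (b2 == w)) + ((a2 == c) && (b3 == w)) + ((a3 == c) && (b0 == w)).
Definition per M e a0 a1 a2 a3 b0 b1 b2 b3 := forall c w, c < M ->
  Pf a0 a1 a2 a3 b0 b1 b2 b3 c w + Qf a0 a1 a2 a3 b0 b1 b2 b3 ((c + e) %% M) w =
  Qf a0 a1 a2 a3 b0 b1 b2 b3 c w + Pf a0 a1 a2 a3 b0 b1 b2 b3 ((c + e) %% M) w.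

Lemma stepA M e a0 a1 a2 a3 b0 b1 b2 b3 c w : 0 < e -> e.*2 = M ->
  [&& a0 < M, a1 < M, a2 < M & a3 < M] ->
  per M e a0 a1 a2 a3 b0 b1 b2 b3 ->
  Qf a0 a1 a2 a3 b0 b1 b2 b3 c w < Pf a0 a1 a2 a3 b0 b1 b2 b3 c w ->
  forall c', c' = (c + e) %% M ->
  [&& b0 == w, b1 != w, b2 == w, b3 != w & [&& ((a0 == c) && (a2 == c')) || ((a0 == c') && (a2 == c)),
     a1 != c, a1 != c', a3 != c & a3 != c']]
  || [&& b0 != w, b1 == w, b2 != w, b3 == w & [&& ((a1 == c) && (a3 == c')) || ((a1 == c') && (a3 == c)),
     a0 != c, a0 != c', a2 != c & a2 != c']].
Proof.
move=> e0 he /and4P[ha0 ha1 ha2 ha3] hp hlt c' hc'.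
have hcM : c < M.
  rewrite ltnNge; apply/negP => hc; move: hlt; rewrite /Pf /Qf.
  have f : forall x, x < M -> (x == c) = false by move=> x hx; apply/negbTE/eqP; lia.
  by rewrite !f.
have hne : c' != c by apply/eqP; rewrite hc'; apply: shift_ne => //; lia.
have := hp c w hcM; rewrite -hc' => hpc.
have hlt' : Qf a0 a1 a2 a3 b0 b1 b2 b3 c' w < Pf a0 a1 a2 a3 b0 b1 b2 b3 c' w by lia.
have := patt (a0 == c) (a1 == c) (a2 == c) (a3 == c) (a0 == c') (a1 == c') (a2 == c') (a3 == c')
  (b0 == w) (b1 == w) (b2 == w) (b3 == w).
rewrite /f2 -/(Pf a0 a1 a2 a3 b0 b1 b2 b3 c w) -/(Qf a0 a1 a2 a3 b0 b1 b2 b3 c w)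
  -/(Pf a0 a1 a2 a3 b0 b1 b2 b3 c' w) -/(Qf a0 a1 a2 a3 b0 b1 b2 b3 c' w) hlt hlt'.
have ex : forall x, ~~ ((x == c) && (x == c')).
  by move=> x; apply/negP => /andP[/eqP -> /eqP h]; move/eqP: hne; rewrite h.
rewrite !ex /=.
by [].
Qed.

Definition Xn M h (a0 a1 a2 a3 b0 b1 b2 b3 : nat) : bool :=
  [&& b2 == b0, b3 == b1, b0 != b1 &
   [&& a2 == (a0 + h) %% M, a3 == (a1 + h) %% M, a1 != a0 & a1 != (a0 + h) %% M]].


Ltac kill :=
  repeat match goal with
  | H : is_true (?x != ?x) |- _ => by rewrite eqxx in H
  | H : is_true (?x == ?y) |- _ => move/eqP: H => H; first [subst x | subst y | rewrite H]
  | H : ?x = ?y |- _ => first [subst x | subst y]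
  | H : is_true (?x != ?y) |- _ =>
     let H1 := fresh in let H2 := fresh in
     have H1 : (x == y) = false := negbTE H;
     (have H2 : (y == x) = false by rewrite eq_sym (negbTE H));
     rewrite ?H1 ?H2; clear H H1 H2
  end; rewrite ?eqxx /=.
Ltac brute :=
  repeat match goal with |- context [?x == ?y] => case: (x == y) end; done.
Lemma shift_facts M e x : 0 < e -> e.*2 = M -> x < M ->
  exists x', [/\ x' = (x + e) %% M, x' < M, x' <> x & (x' + e) %% M = x].
Proof.
move=> e0 he hx; exists ((x + e) %% M); split => //.
- apply: ltn_pmod; lia.
- apply: shift_ne => //; lia.
- exact: invol.
Qed.

Lemma lemA M e a0 a1 a2 a3 b0 b1 b2 b3 c w : 0 < e -> e.*2 = M ->
  [&& a0 < M, a1 < M, a2 < M & a3 < M] ->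
  per M e a0 a1 a2 a3 b0 b1 b2 b3 ->
  Qf a0 a1 a2 a3 b0 b1 b2 b3 c w < Pf a0 a1 a2 a3 b0 b1 b2 b3 c w ->
  Xn M e a0 a1 a2 a3 b0 b1 b2 b3.
Proof.
move=> e0 he ha hp hlt.
have ha' := ha; move/and4P: ha' => [ha0 ha1 ha2 ha3].
have hcM : c < M.
  rewrite ltnNge; apply/negP => hc; move: hlt; rewrite /Pf /Qf.
  have f : forall x, x < M -> (x == c) = false by move=> x hx; apply/negbTE/eqP; lia.
  by rewrite !f.
have [c' [hc' c'M c'c cinv]] := @shift_facts M e c e0 he hcM.
rewrite /Xn.
case/orP: (@stepA M e a0 a1 a2 a3 b0 b1 b2 b3 c w e0 he ha hp hlt c' hc') => /and5P[z0 z1 z2 z3 /and5P[xy x1 y1 x3 y3]].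
- have [a1' [ha1' a1'M a1'a cinv1]] := @shift_facts M e a1 e0 he ha1.
  have hlt2 : Qf a0 a1 a2 a3 b0 b1 b2 b3 a1 b1 < Pf a0 a1 a2 a3 b0 b1 b2 b3 a1 b1.
    rewrite /Pf /Qf; move: xy; clear -x1 y1 z0 z1 z2; case/orP => /andP[ea0 ea2]; kill; brute.
  case/orP: (@stepA M e a0 a1 a2 a3 b0 b1 b2 b3 a1 b1 e0 he ha hp hlt2 a1' ha1') => /and5P[u0 u1 u2 u3 /and5P[xy2 p1 q1 p3 q3]].
    exfalso; clear -z0 u0 z1; kill.
  rewrite -ha1'.
  move: xy xy2; case/orP => /andP[/eqP ea0 /eqP ea2]; rewrite ea0 ?cinv -?hc';
   clear -ea0 ea2 x1 y1 x3 y3 z0 z1 z2 z3 u0 u1 u2 u3 p1 q1 p3 q3 a1'a c'c;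
   case/orP => /andP[h1 h2]; kill; brute.
- have [a0' [ha0' a0'M a0'a cinv0]] := @shift_facts M e a0 e0 he ha0.
  have [a1' [ha1' a1'M a1'a cinv1]] := @shift_facts M e a1 e0 he ha1.
  have hlt2 : Qf a0 a1 a2 a3 b0 b1 b2 b3 a0 b0 < Pf a0 a1 a2 a3 b0 b1 b2 b3 a0 b0.
    rewrite /Pf /Qf; move: xy; clear -x1 y1 x3 y3 z0 z1 z2 z3; case/orP => /andP[ea0 ea2]; kill; brute.
  case/orP: (@stepA M e a0 a1 a2 a3 b0 b1 b2 b3 a0 b0 e0 he ha hp hlt2 a0' ha0') => /and5P[u0 u1 u2 u3 /and5P[xy2 p1 q1 p3 q3]]; last first.
    exfalso; clear -z0 u0 z1; kill.
  rewrite -ha1' -ha0'.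
  move: xy xy2; case/orP => /andP[/eqP ea0 /eqP ea2].
  + have e3 : a3 = a1' by rewrite ea2 hc' -ea0 -ha1'.
    clear -ea0 ea2 e3 x1 y1 x3 y3 z0 z1 z2 z3 u0 u1 u2 u3 p1 q1 p3 q3 a1'a a0'a c'c;
    case/orP => /andP[h1 h2]; kill; brute.
  + have e3 : a3 = a1' by rewrite ea2 ha1' ea0 hc' invol.
    clear -ea0 ea2 e3 x1 y1 x3 y3 z0 z1 z2 z3 u0 u1 u2 u3 p1 q1 p3 q3 a1'a a0'a c'c;
    case/orP => /andP[h1 h2]; kill; brute.
Qed.

Lemma PQswap a0 a1 a2 a3 b0 b1 b2 b3 c w :
  Pf a0 a3 a2 a1 b1 b0 b3 b2 c w = Qf a0 a1 a2 a3 b0 b1 b2 b3 c w /\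
  Qf a0 a3 a2 a1 b1 b0 b3 b2 c w = Pf a0 a1 a2 a3 b0 b1 b2 b3 c w.
Proof.
rewrite /Pf /Qf; split.
- move: ((a0 == c) && (b1 == w)) ((a1 == c) && (b2 == w)) ((a2 == c) && (b3 == w)) ((a3 == c) && (b0 == w)).
  move=> [] [] [] []; done.
- move: ((a0 == c) && (b0 == w)) ((a1 == c) && (b1 == w)) ((a2 == c) && (b2 == w)) ((a3 == c) && (b3 == w)).
  move=> [] [] [] []; done.
Qed.

Lemma per_swap M e a0 a1 a2 a3 b0 b1 b2 b3 :
  per M e a0 a1 a2 a3 b0 b1 b2 b3 -> per M e a0 a3 a2 a1 b1 b0 b3 b2.
Proof.
move=> hp c w hc; have := hp c w hc.
case: (PQswap a0 a1 a2 a3 b0 b1 b2 b3 c w) => -> ->.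
case: (PQswap a0 a1 a2 a3 b0 b1 b2 b3 ((c + e) %% M) w) => -> ->.
lia.
Qed.

Lemma lemA' M e a0 a1 a2 a3 b0 b1 b2 b3 c w : 0 < e -> e.*2 = M ->
  [&& a0 < M, a1 < M, a2 < M & a3 < M] ->
  per M e a0 a1 a2 a3 b0 b1 b2 b3 ->
  Pf a0 a1 a2 a3 b0 b1 b2 b3 c w < Qf a0 a1 a2 a3 b0 b1 b2 b3 c w ->
  Xn M e a0 a1 a2 a3 b0 b1 b2 b3.
Proof.
move=> e0 he ha hp hlt.
have ha' := ha; move/and4P: ha' => [ha0 ha1 ha2 ha3].
have X := @lemA M e a0 a3 a2 a1 b1 b0 b3 b2 c w e0 he ltac:(by apply/and4P) (@per_swap M e a0 a1 a2 a3 b0 b1 b2 b3 hp).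
case: (PQswap a0 a1 a2 a3 b0 b1 b2 b3 c w) X => -> -> /(_ hlt).
have [a0' [ha0' a0'M a0'a cinv0]] := @shift_facts M e a0 e0 he ha0.
have [a3' [ha3' a3'M a3'a cinv3]] := @shift_facts M e a3 e0 he ha3.
rewrite /Xn -ha0' -ha3' => /and4P[h1 h2 h3 /and4P[h4 h5 h6 h7]].
move/eqP: h5 => h5. rewrite h5 cinv3.
have n1 : a3' != a0 by apply/eqP => E; move: h7; rewrite ha0' -E cinv3 eqxx.
have n2 : a3' != a0' by apply/eqP => E; move: h6; rewrite -{1}cinv3 E cinv0 eqxx.
clear -h1 h2 h3 h4 n1 n2; kill; brute.
Qed.

Lemma no3 M e a0 a1 a2 a3 b0 b1 b2 b3 c w : 0 < e -> e < M -> e.*2 != M ->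
  [&& a0 < M, a1 < M, a2 < M & a3 < M] ->
  per M e a0 a1 a2 a3 b0 b1 b2 b3 ->
  Qf a0 a1 a2 a3 b0 b1 b2 b3 c w < Pf a0 a1 a2 a3 b0 b1 b2 b3 c w -> False.
Proof.
move=> e0 eM e2 ha hp hlt.
have ha' := ha; move/and4P: ha' => [ha0 ha1 ha2 ha3].
have hcM : c < M.
  rewrite ltnNge; apply/negP => hc; move: hlt; rewrite /Pf /Qf.
  have f : forall x, x < M -> (x == c) = false by move=> x hx; apply/negbTE/eqP; lia.
  by rewrite !f.
have M0 : 0 < M by lia.
set c1 := (c + e) %% M.
have c1M : c1 < M by apply: ltn_pmod.
set c2 := (c1 + e) %% M.
have n01 : c1 != c by apply/eqP; apply: shift_ne.
have n12 : c2 != c1 by apply/eqP; apply: shift_ne.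
have n02 : c2 != c by apply/eqP; apply: shift2_ne.
have h1 := hp c w hcM; have h2 := hp c1 w c1M; rewrite -/c1 in h1; rewrite -/c2 in h2.
have hlt1 : Qf a0 a1 a2 a3 b0 b1 b2 b3 c1 w < Pf a0 a1 a2 a3 b0 b1 b2 b3 c1 w by lia.
have hlt2 : Qf a0 a1 a2 a3 b0 b1 b2 b3 c2 w < Pf a0 a1 a2 a3 b0 b1 b2 b3 c2 w by lia.
have := patt3 (a0 == c) (a1 == c) (a2 == c) (a3 == c) (a0 == c1) (a1 == c1) (a2 == c1) (a3 == c1)
  (a0 == c2) (a1 == c2) (a2 == c2) (a3 == c2) (b0 == w) (b1 == w) (b2 == w) (b3 == w).
rewrite /f3 -/(Pf a0 a1 a2 a3 b0 b1 b2 b3 c w) -/(Qf a0 a1 a2 a3 b0 b1 b2 b3 c w)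
  -/(Pf a0 a1 a2 a3 b0 b1 b2 b3 c1 w) -/(Qf a0 a1 a2 a3 b0 b1 b2 b3 c1 w)
  -/(Pf a0 a1 a2 a3 b0 b1 b2 b3 c2 w) -/(Qf a0 a1 a2 a3 b0 b1 b2 b3 c2 w) hlt hlt1 hlt2.
have ex : forall x y z : nat, y != z -> ~~ ((x == y) && (x == z)).
  by move=> x y z hyz; apply/negP => /andP[/eqP k1 /eqP k2]; move/eqP: hyz; apply; rewrite -k1 -k2.
by rewrite !ex // eq_sym.
Qed.

Definition dlt a0 a1 a2 a3 b0 b1 b2 b3 :=
  forall c w, Pf a0 a1 a2 a3 b0 b1 b2 b3 c w = Qf a0 a1 a2 a3 b0 b1 b2 b3 c w.

Lemma coreF M e a0 a1 a2 a3 b0 b1 b2 b3 : e < M ->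
  [&& a0 < M, a1 < M, a2 < M & a3 < M] ->
  per M e a0 a1 a2 a3 b0 b1 b2 b3 ->
  e = 0 \/ dlt a0 a1 a2 a3 b0 b1 b2 b3 \/ (e.*2 = M /\ Xn M e a0 a1 a2 a3 b0 b1 b2 b3).
Proof.
move=> eM ha hp.
case: (posnP e) => [-> | e0]; first by left.
right; case: (classic (dlt a0 a1 a2 a3 b0 b1 b2 b3)) => hd; [by left | right].
have [c /not_all_ex_not [w hw]] := not_all_ex_not _ _ hd.
have ha' := ha; move/and4P: ha' => [ha0 ha1 ha2 ha3].
case: (eqVneq (e.*2) M) => he.
  split => //.
  case: (ltngtP (Qf a0 a1 a2 a3 b0 b1 b2 b3 c w) (Pf a0 a1 a2 a3 b0 b1 b2 b3 c w)) => h.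
  - exact: (@lemA M e a0 a1 a2 a3 b0 b1 b2 b3 c w).
  - exact: (@lemA' M e a0 a1 a2 a3 b0 b1 b2 b3 c w).
  - by case: hw.
exfalso.
case: (ltngtP (Qf a0 a1 a2 a3 b0 b1 b2 b3 c w) (Pf a0 a1 a2 a3 b0 b1 b2 b3 c w)) => h.
- exact: (@no3 M e a0 a1 a2 a3 b0 b1 b2 b3 c w).
- apply: (@no3 M e a0 a3 a2 a1 b1 b0 b3 b2 c w) => //.
  + by apply/and4P.
  + exact: (@per_swap M e a0 a1 a2 a3 b0 b1 b2 b3 hp).
  + by case: (PQswap a0 a1 a2 a3 b0 b1 b2 b3 c w) => -> ->.
- by case: hw.
Qed.

Lemma eqsh M e x c : e.*2 = M -> x < M -> c < M ->
  (x == (c + e) %% M) = ((x + e) %% M == c).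
Proof.
move=> he hx hc; apply/eqP/eqP => [->|<-]; by rewrite invol.
Qed.

Lemma shinj M e x c : e.*2 = M -> x < M -> c < M ->
  ((x + e) %% M == (c + e) %% M) = (x == c).
Proof.
move=> he hx hc; apply/eqP/eqP => [E|->] //.
by rewrite -(@invol M e x he hx) E (@invol M e c he hc).
Qed.

Lemma coreB M e a0 a1 a2 a3 b0 b1 b2 b3 : e < M ->
  [&& a0 < M, a1 < M, a2 < M & a3 < M] ->
  (e = 0 \/ dlt a0 a1 a2 a3 b0 b1 b2 b3 \/ (e.*2 = M /\ Xn M e a0 a1 a2 a3 b0 b1 b2 b3)) ->
  per M e a0 a1 a2 a3 b0 b1 b2 b3.
Proof.
move=> eM ha [->|[hd|[he hx]]] c w hc.
- by rewrite addn0 modn_small // addnC.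
- by rewrite !hd.
have ha' := ha; move/and4P: ha' => [ha0 ha1 ha2 ha3].
move: hx; rewrite /Xn => /and4P[/eqP h1 /eqP h2 _ /and4P[/eqP h3 /eqP h4 _ _]].
rewrite h1 h2 h3 h4 /Pf /Qf !shinj // !(@eqsh M e _ c) //.
move: (a0 == c) (a1 == c) (((a0 + e) %% M) == c) (((a1 + e) %% M) == c) => [] [] [] [];
 move: (b0 == w) (b1 == w) => [] []; done.
Qed.

Lemma shiftS M s x c : s < M -> x < M -> c < M ->
  ((s + x) %% M == (s + c) %% M) = (x == c).
Proof.
move=> hs hx hc; rewrite !(@modM2 _ M); try lia.
by repeat case: ifPn => ?; apply/idP/idP => /eqP ?; apply/eqP; lia.
Qed.

Lemma shiftP M s t x c : s < M -> t < M -> x < M -> c < M ->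
  ((t + x) %% M == (s + c) %% M) = (x == (c + (s + (M - t)) %% M) %% M).
Proof.
move=> hs ht hx hc.
have [e [he1 he2 he3]] : exists e, [/\ e = (s + (M - t)) %% M, e < M & (e + t = s + M \/ e + t = s)].
  exists ((s + (M - t)) %% M); split => //; first by apply: ltn_pmod; lia.
  rewrite modM2; last by lia.
  case: ifPn; lia.
rewrite -he1; clear he1.
rewrite !(@modM2 _ M); try lia.
by repeat case: ifPn => ?; apply/idP/idP => /eqP ?; apply/eqP; lia.
Qed.

Lemma per_iff M s t a0 a1 a2 a3 b0 b1 b2 b3 : s < M -> t < M ->
  a0 < M -> a1 < M -> a2 < M -> a3 < M ->
  (forall v w,
    Pf ((s + a0) %% M) ((s + a1) %% M) ((s + a2) %% M) ((s + a3) %% M) b0 b1 b2 b3 v w +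
    Qf ((t + a0) %% M) ((t + a1) %% M) ((t + a2) %% M) ((t + a3) %% M) b0 b1 b2 b3 v w =
    Qf ((s + a0) %% M) ((s + a1) %% M) ((s + a2) %% M) ((s + a3) %% M) b0 b1 b2 b3 v w +
    Pf ((t + a0) %% M) ((t + a1) %% M) ((t + a2) %% M) ((t + a3) %% M) b0 b1 b2 b3 v w)
  <-> per M ((s + (M - t)) %% M) a0 a1 a2 a3 b0 b1 b2 b3.
Proof.
move=> hs ht h0 h1 h2 h3; split.
- move=> H c w hc; move: (H ((s + c) %% M) w).
  by rewrite /Pf /Qf !(@shiftS M s) // !(@shiftP M s t).
- move=> hp v w; case: (ltnP v M) => hv.
  + have [c [hc hcv]] : exists c, c < M /\ (s + c) %% M = v.
      exists (if s <= v then v - s else v + M - s); split; first by case: ifP; lia.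
      case: ifPn => hsv; rewrite (@modM2 _ M); try lia; case: ifPn; lia.
    move: (hp c w hc); rewrite -hcv /Pf /Qf !(@shiftS M s) // !(@shiftP M s t) //.
  + have f : forall x, (x %% M == v) = false.
      move=> x; apply/negbTE; rewrite neq_ltn; apply/orP; left.
      by apply: (leq_trans (ltn_pmod _ _)) hv; lia.
    by rewrite /Pf /Qf !f.
Qed.

Lemma sum4 (F : 'I_4 -> nat) : \sum_(y < 4) F y = F (inord 0) + F (inord 1) + F (inord 2) + F (inord 3).
Proof.
rewrite !big_ord_recl big_ord0 addn0 !addnA.
congr (F _ + F _ + F _ + F _); apply/val_inj; rewrite /= inordK //.
Qed.

Lemma ordS0 : ordS (inord 0 : 'I_4) = inord 1. Proof. by apply/val_inj; rewrite /= !inordK. Qed.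
Lemma ordS1 : ordS (inord 1 : 'I_4) = inord 2. Proof. by apply/val_inj; rewrite /= !inordK. Qed.
Lemma ordS2 : ordS (inord 2 : 'I_4) = inord 3. Proof. by apply/val_inj; rewrite /= !inordK. Qed.
Lemma ordS3 : ordS (inord 3 : 'I_4) = inord 0. Proof. by apply/val_inj; rewrite /= !inordK. Qed.

Lemma cnt2 (f g : 'I_4 -> nat * nat) z :
  count_mem z (flatten [seq [:: f y; g y] | y <- enum 'I_4]) = \sum_(y < 4) ((f y == z) + (g y == z)).
Proof.
rewrite count_flatten sumnE !big_map.
by apply: eq_bigr => y _ /=; rewrite addn0.
Qed.

Lemma cnt1 (f : 'I_4 -> nat * nat) z :
  count_mem z [seq f y | y <- enum 'I_4] = \sum_(y < 4) (f y == z).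
Proof.
rewrite count_map -sum1_count big_mkcond /= -big_enum /=.
by apply: eq_bigr => y _; case: (f y == z).
Qed.

Lemma rearr (A0 A1 A2 A3 B0 B1 B2 B3 : nat) :
  (A0 + B0) + (A1 + B1) + (A2 + B2) + (A3 + B3) = (A0 + A1 + A2 + A3) + (B0 + B1 + B2 + B3).
Proof. lia. Qed.

Definition A4 n (a : {ffun 'I_4 -> 'I_n}) k := nat_of_ord (a (inord k)).
Arguments A4 {n} a k.

Lemma condE_iff M N (i : {ffun 'I_2 -> 'I_M}) (a : {ffun 'I_4 -> 'I_M}) (b : {ffun 'I_4 -> 'I_N}) x :
  condE i a b x <-> forall v w,
    Pf ((i x + A4 a 0) %% M) ((i x + A4 a 1) %% M) ((i x + A4 a 2) %% M) ((i x + A4 a 3) %% M)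
       (A4 b 0) (A4 b 1) (A4 b 2) (A4 b 3) v w +
    Qf ((i (ordS x) + A4 a 0) %% M) ((i (ordS x) + A4 a 1) %% M) ((i (ordS x) + A4 a 2) %% M) ((i (ordS x) + A4 a 3) %% M)
       (A4 b 0) (A4 b 1) (A4 b 2) (A4 b 3) v w =
    Qf ((i x + A4 a 0) %% M) ((i x + A4 a 1) %% M) ((i x + A4 a 2) %% M) ((i x + A4 a 3) %% M)
       (A4 b 0) (A4 b 1) (A4 b 2) (A4 b 3) v w +
    Pf ((i (ordS x) + A4 a 0) %% M) ((i (ordS x) + A4 a 1) %% M) ((i (ordS x) + A4 a 2) %% M) ((i (ordS x) + A4 a 3) %% M)
       (A4 b 0) (A4 b 1) (A4 b 2) (A4 b 3) v w.
Proof.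
rewrite /condE; split.
- move/permP => H v w; move: (H (pred1 (v, w))).
  rewrite !cnt2 !sum4 !xpair_eqE !ordS0 !ordS1 !ordS2 !ordS3 !rearr.
  by rewrite /Pf /Qf /A4.
- move=> H; apply/allP => -[v w] _ /=; apply/eqP.
  rewrite !cnt2 !sum4 !xpair_eqE !ordS0 !ordS1 !ordS2 !ordS3 !rearr.
  by move: (H v w); rewrite /Pf /Qf /A4.
Qed.

Lemma ordS2_0 : ordS (ord0 : 'I_2) = ord_max. Proof. by apply/val_inj. Qed.
Lemma ordS2_1 : ordS (ord_max : 'I_2) = ord0. Proof. by apply/val_inj. Qed.

Lemma A4lt n (a : {ffun 'I_4 -> 'I_n}) k : A4 a k < n.
Proof. exact: ltn_ord. Qed.
Arguments A4lt {n} a k.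

Definition eI M (i : {ffun 'I_2 -> 'I_M}) := (nat_of_ord (i ord0) + (M - i ord_max)) %% M.
Arguments eI {M} i.

Lemma allE_iff M N (i : {ffun 'I_2 -> 'I_M}) (a : {ffun 'I_4 -> 'I_M}) (b : {ffun 'I_4 -> 'I_N}) :
  [forall x, condE i a b x] <->
  per M (eI i) (A4 a 0) (A4 a 1) (A4 a 2) (A4 a 3) (A4 b 0) (A4 b 1) (A4 b 2) (A4 b 3).
Proof.
have h0 := ltn_ord (i ord0); have h1 := ltn_ord (i ord_max).
have ha := A4lt a.
split.
- move/forallP/(_ ord0)/condE_iff; rewrite ordS2_0 => H.
  by apply/per_iff.
- move=> hp; apply/forallP => x; apply/condE_iff.
  have H := proj2 (per_iff _ _ _ _ _ _ _ _ _ _ _ h0 h1 (ha 0) (ha 1) (ha 2) (ha 3)) hp.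
  have [->|->] : x = ord0 \/ x = ord_max.
    by case: x => [[|[|//]] hx]; [left|right]; apply/val_inj.
  + by rewrite ordS2_0.
  + by rewrite ordS2_1 => v w; have := H v w; lia.
Qed.

Definition dB M N (a : {ffun 'I_4 -> 'I_M}) (b : {ffun 'I_4 -> 'I_N}) : bool :=
  perm_eq [seq (val (a y), val (b y)) | y <- enum 'I_4]
          [seq (val (a y), val (b (ordS y))) | y <- enum 'I_4].
Arguments dB {M N} a b.

Lemma dB_iff M N (a : {ffun 'I_4 -> 'I_M}) (b : {ffun 'I_4 -> 'I_N}) :
  dB a b <-> dlt (A4 a 0) (A4 a 1) (A4 a 2) (A4 a 3) (A4 b 0) (A4 b 1) (A4 b 2) (A4 b 3).
Proof.
rewrite /dB; split.
- move/permP => H c w; move: (H (pred1 (c, w))).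
  by rewrite !cnt1 !sum4 !xpair_eqE !ordS0 !ordS1 !ordS2 !ordS3 /Pf /Qf /A4.
- move=> H; apply/allP => -[c w] _ /=; apply/eqP.
  rewrite !cnt1 !sum4 !xpair_eqE !ordS0 !ordS1 !ordS2 !ordS3.
  by move: (H c w); rewrite /Pf /Qf /A4.
Qed.

Definition XB M N (a : {ffun 'I_4 -> 'I_M}) (b : {ffun 'I_4 -> 'I_N}) : bool :=
  Xn M (M./2) (A4 a 0) (A4 a 1) (A4 a 2) (A4 a 3) (A4 b 0) (A4 b 1) (A4 b 2) (A4 b 3).
Arguments XB {M N} a b.

Lemma E_bool M N (hM : 0 < M) (i : {ffun 'I_2 -> 'I_M}) (a : {ffun 'I_4 -> 'I_M}) (b : {ffun 'I_4 -> 'I_N}) :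
  [forall x, condE i a b x] = [|| eI i == 0, dB a b | ((eI i).*2 == M) && XB a b].
Proof.
have eM : eI i < M by apply: ltn_pmod.
have ha := A4lt a.
have hA : [&& A4 a 0 < M, A4 a 1 < M, A4 a 2 < M & A4 a 3 < M] by rewrite !ha.
apply/idP/idP.
- move/allE_iff => hp.
  case: (@coreF _ _ _ _ _ _ _ _ _ _ eM hA hp) => [->|[hd|[he hx]]].
  + by rewrite eqxx.
  + by apply/or3P; apply: Or32; apply/dB_iff.
  + have e2 : (eI i).*2./2 = eI i := doubleK _.
    rewrite he in e2.
    by rewrite he eqxx /XB e2 hx !orbT.
- move=> H; apply/allE_iff; apply: coreB => //.
  case/or3P: H => [/eqP h0 | /dB_iff hd | /andP[/eqP he hx]].
  + by left.
  + by right; left.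
  + have e2 : (eI i).*2./2 = eI i := doubleK _.
    rewrite he in e2.
    by right; right; split => //; move: hx; rewrite /XB e2.
Qed.


Definition mk4 n (x0 x1 x2 x3 : 'I_n) : {ffun 'I_4 -> 'I_n} :=
  [ffun j : 'I_4 => nth x0 [:: x0; x1; x2; x3] j].
Arguments mk4 {n} x0 x1 x2 x3.

Lemma mk4E n (x0 x1 x2 x3 : 'I_n) :
  [/\ A4 (mk4 x0 x1 x2 x3) 0 = x0, A4 (mk4 x0 x1 x2 x3) 1 = x1,
      A4 (mk4 x0 x1 x2 x3) 2 = x2 & A4 (mk4 x0 x1 x2 x3) 3 = x3].
Proof. by rewrite /A4 !ffunE !inordK. Qed.

Lemma sum_ffun4 n (F : {ffun 'I_4 -> 'I_n} -> nat) :
  \sum_f F f = \sum_(x0 : 'I_n) \sum_(x1 : 'I_n) \sum_(x2 : 'I_n) \sum_(x3 : 'I_n) F (mk4 x0 x1 x2 x3).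
Proof.
rewrite (reindex (fun p : ('I_n * 'I_n) * ('I_n * 'I_n) => mk4 p.1.1 p.1.2 p.2.1 p.2.2)) /=.
  rewrite -(pair_bigA _ (fun q r => F (mk4 q.1 q.2 r.1 r.2))) /=.
  rewrite -(pair_bigA _ (fun x0 x1 => \sum_(r : 'I_n * 'I_n) F (mk4 x0 x1 r.1 r.2))) /=.
  apply: eq_bigr => x0 _; apply: eq_bigr => x1 _.
  by rewrite -(pair_bigA _ (fun x2 x3 => F (mk4 x0 x1 x2 x3))).
exists (fun f => ((f (inord 0), f (inord 1)), (f (inord 2), f (inord 3)))).
- by move=> [[x0 x1] [x2 x3]] _; rewrite !ffunE /= !inordK.
- move=> f _; apply/ffunP => j; rewrite ffunE.
  case: j => [[|[|[|[|//]]]] hj] /=; congr (f _); by apply/val_inj; rewrite /= inordK.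
Qed.

Definition mk2 n (x y : 'I_n) : {ffun 'I_2 -> 'I_n} := [ffun j : 'I_2 => if j == ord0 then x else y].
Arguments mk2 {n} x y.

Lemma sum_ffun2 n (F : {ffun 'I_2 -> 'I_n} -> nat) :
  \sum_f F f = \sum_(x : 'I_n) \sum_(y : 'I_n) F (mk2 x y).
Proof.
rewrite (reindex (fun p : 'I_n * 'I_n => mk2 p.1 p.2)) /=.
  by rewrite -(pair_bigA _ (fun x y => F (mk2 x y))).
exists (fun f => (f ord0, f ord_max)).
- by move=> [x y] _; rewrite !ffunE.
- move=> f _; apply/ffunP => j; rewrite ffunE.
  by case: j => [[|[|//]] hj] /=; congr (f _); apply/val_inj.
Qed.

Lemma sum_eq n k : \sum_(e : 'I_n) (nat_of_ord e == k) = (k < n).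
Proof.
case: (ltnP k n) => hk.
- rewrite (bigD1 (Ordinal hk)) //= eqxx big1 ?addn0 // => j hj.
  suff -> : (nat_of_ord j == k) = false by [].
  apply/negbTE; apply: contra hj => /eqP E; apply/eqP/val_inj; exact E.
- rewrite big1 // => j _.
  suff -> : (nat_of_ord j == k) = false by [].
  apply/negbTE/eqP => E; move: (ltn_ord j); lia.
Qed.

Lemma sum_eq_mul_l n k c : \sum_(e : 'I_n) (c * (nat_of_ord e == k)) = c * (k < n).
Proof. by rewrite -big_distrr /= sum_eq. Qed.

Lemma sum_ne n (x0 : 'I_n) : \sum_(x1 : 'I_n) (nat_of_ord x0 != x1) = n - 1.
Proof.
have : \sum_(x1 : 'I_n) ((nat_of_ord x0 != x1) + (nat_of_ord x1 == x0)) = n.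
  rewrite (eq_bigr (fun _ => 1)); first by rewrite sum_nat_const card_ord muln1.
  by move=> x1 _; rewrite eq_sym; case: (_ == _).
rewrite big_split /= sum_eq ltn_ord; lia.
Qed.

Lemma sum_bpart n :
  \sum_(b : {ffun 'I_4 -> 'I_n}) [&& A4 b 2 == A4 b 0, A4 b 3 == A4 b 1 & A4 b 0 != A4 b 1] = n * (n - 1).
Proof.
rewrite sum_ffun4.
rewrite (eq_bigr (fun _ => n - 1)); first by rewrite sum_nat_const card_ord.
move=> x0 _; rewrite -(@sum_ne n x0); apply: eq_bigr => x1 _.
rewrite (eq_bigr (fun x2 => (nat_of_ord x0 != x1) * (nat_of_ord x2 == x0))).
  by rewrite sum_eq_mul_l ltn_ord muln1.
move=> x2 _.
rewrite (eq_bigr (fun x3 => ((nat_of_ord x0 != x1) * (nat_of_ord x2 == x0)) * (nat_of_ord x3 == x1))).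
  by rewrite sum_eq_mul_l ltn_ord muln1.
move=> x3 _; case: (@mk4E _ x0 x1 x2 x3) => -> -> -> ->.
by case: (_ == _); case: (_ == _); case: (_ == _).
Qed.

Lemma sum_ne2 n (x0 y : 'I_n) : nat_of_ord x0 != y ->
  \sum_(x1 : 'I_n) ((nat_of_ord x1 != x0) && (nat_of_ord x1 != y)) = n - 2.
Proof.
move=> hne.
have : \sum_(x1 : 'I_n) (((nat_of_ord x1 != x0) && (nat_of_ord x1 != y)) + (nat_of_ord x1 == x0) + (nat_of_ord x1 == y)) = n.
  rewrite (eq_bigr (fun _ => 1)); first by rewrite sum_nat_const card_ord muln1.
  move=> x1 _; move: hne; case: (nat_of_ord x1 =P x0) => [->|_]; first by move/negbTE ->.
  by move=> _; case: (_ == _).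
rewrite !big_split /= !sum_eq !ltn_ord; lia.
Qed.

Lemma sum_apart M (hM : 0 < M) :
  ~~ odd M ->
  \sum_(a : {ffun 'I_4 -> 'I_M}) [&& A4 a 2 == (A4 a 0 + M./2) %% M, A4 a 3 == (A4 a 1 + M./2) %% M,
      A4 a 1 != A4 a 0 & A4 a 1 != (A4 a 0 + M./2) %% M] = M * (M - 2).
Proof.
move=> ev.
set h := M./2.
have hM2 : h.*2 = M by rewrite /h -[RHS](odd_double_half M) (negbTE ev).
have h0 : 0 < h by lia.
rewrite sum_ffun4.
rewrite (eq_bigr (fun _ => M - 2)); first by rewrite sum_nat_const card_ord.
move=> x0 _.
have lx0 : (x0 + h) %% M < M by apply: ltn_pmod.
rewrite -(@sum_ne2 M x0 (Ordinal lx0)); last by apply/eqP => /esym; apply: shift_ne => //; lia.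
apply: eq_bigr => x1 _.
have lx1 : (x1 + h) %% M < M by apply: ltn_pmod.
rewrite (eq_bigr (fun x2 => ((nat_of_ord x1 != x0) && (nat_of_ord x1 != (x0 + h) %% M)) * (nat_of_ord x2 == (x0 + h) %% M))).
  by rewrite sum_eq_mul_l lx0 muln1.
move=> x2 _.
rewrite (eq_bigr (fun x3 => (((nat_of_ord x1 != x0) && (nat_of_ord x1 != (x0 + h) %% M)) * (nat_of_ord x2 == (x0 + h) %% M)) * (nat_of_ord x3 == (x1 + h) %% M))).
  by rewrite sum_eq_mul_l lx1 muln1.
move=> x3 _; case: (@mk4E _ x0 x1 x2 x3) => -> -> -> ->.
by case: (_ == _); case: (_ == _); case: (_ == _); case: (_ == _).
Qed.


Set Warnings "-notation-overridden".

Lemma card_set_sum (T : finType) (P : pred T) : #|[set t | P t]| = \sum_t P t.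
Proof.
rewrite cardsE -sum1_card big_mkcond /=.
by apply: eq_bigr => t _; rewrite unfold_in; case: (P t).
Qed.

Lemma sum_triple (T1 T2 T3 : finType) (F : T1 -> T2 -> T3 -> nat) :
  \sum_(t : T1 * T2 * T3) F t.1.1 t.1.2 t.2 = \sum_x \sum_y \sum_z F x y z.
Proof. by rewrite pair_bigA pair_bigA. Qed.

Lemma dbl_eq M e : (e.*2 == M) = (e == M./2) && ~~ odd M.
Proof.
apply/eqP/andP => [he | [/eqP -> ev]].
- by rewrite -he doubleK odd_double.
- by rewrite -[RHS](odd_double_half M) (negbTE ev).
Qed.

Lemma half_lt M : 0 < M -> M./2 < M.
Proof. by move=> hM; rewrite -divn2 ltn_Pdiv. Qed.

Lemma sum_cb M (hM : 0 < M) (d x : bool) :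
  \sum_(e : 'I_M) [|| nat_of_ord e == 0, d | ((nat_of_ord e).*2 == M) && x]
  = d * M + (~~ d) * (1 + (~~ odd M && x)).
Proof.
case: d => /=.
- rewrite (eq_bigr (fun _ => 1)) ?sum_nat_const ?card_ord ?muln1; first by rewrite mul1n mul0n addn0.
  by move=> e _; rewrite orbT.
- rewrite (eq_bigr (fun e : 'I_M => (nat_of_ord e == 0) + ((~~ odd M && x) * (nat_of_ord e == M./2)))).
  + rewrite big_split /= sum_eq hM sum_eq_mul_l half_lt //.
    by rewrite mul0n mul1n add0n muln1.
  + move=> e _; rewrite dbl_eq; case: (nat_of_ord e =P 0) => [->|_].
    * have F : (0.*2 == M) = false by apply/eqP; lia.
      by move: F; rewrite dbl_eq; case: (0 == M./2); case: (odd M); case: x.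
    * by case: (_ == M./2); case: (odd M); case: x.
Qed.

Lemma XB_ndB M N (hM : 0 < M) (ev : ~~ odd M) (a : {ffun 'I_4 -> 'I_M}) (b : {ffun 'I_4 -> 'I_N}) :
  XB a b -> ~~ dB a b.
Proof.
move=> hx; apply/negP => /dB_iff hd.
set h := M./2.
have hM2 : h.*2 = M by rewrite /h -[RHS](odd_double_half M) (negbTE ev).
have h0 : 0 < h by lia.
have hhM : h < M by lia.
have ha := A4lt a.
move: hx; rewrite /XB /Xn -/h => /and4P[/eqP e1 /eqP e2 n01 /and4P[/eqP e3 /eqP e4 n10 n1h]].
have n20 : A4 a 2 != A4 a 0 by rewrite e3; apply/eqP; apply: shift_ne.
have n30 : A4 a 3 != A4 a 0.
  rewrite e4; apply/eqP => E; move/eqP: n1h; apply; rewrite -E invol //.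
have : Pf (A4 a 0) (A4 a 1) (A4 a 2) (A4 a 3) (A4 b 0) (A4 b 1) (A4 b 2) (A4 b 3) (A4 a 0) (A4 b 0)
  != Qf (A4 a 0) (A4 a 1) (A4 a 2) (A4 a 3) (A4 b 0) (A4 b 1) (A4 b 2) (A4 b 3) (A4 a 0) (A4 b 0).
  rewrite /Pf /Qf e1 e2.
  clear e3 e4 n1h hd ha.
  move: n01 n10 n20 n30; move: (A4 a 0) (A4 a 1) (A4 a 2) (A4 a 3) (A4 b 0) (A4 b 1) => a0 a1 a2 a3 b0 b1.
  move=> n01 n10 n20 n30; kill; brute.
by rewrite hd eqxx.
Qed.

Lemma count_delta_sum M N :
  count_delta M N 4 = \sum_(a : {ffun 'I_4 -> 'I_M}) \sum_(b : {ffun 'I_4 -> 'I_N}) (dB a b : nat).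
Proof.
rewrite /count_delta card_set_sum.
transitivity (\sum_(p : {ffun 'I_4 -> 'I_M} * {ffun 'I_4 -> 'I_N}) (dB p.1 p.2 : nat)); first by [].
by rewrite pair_bigA.
Qed.

Lemma count_d_eq M N (hM : 0 < M) :
  count_d M N 4 2 = M * (M * count_delta M N 4 +
     \sum_(a : {ffun 'I_4 -> 'I_M}) \sum_(b : {ffun 'I_4 -> 'I_N}) (~~ dB a b : nat) +
     (~~ odd M) * (M * (M - 2) * (N * (N - 1)))).
Proof.
rewrite /count_d card_set_sum.
under eq_bigr => t _ do rewrite E_bool //.
rewrite (@sum_triple _ _ _ (fun (i : {ffun 'I_2 -> 'I_M}) (a : {ffun 'I_4 -> 'I_M}) (b : {ffun 'I_4 -> 'I_N}) =>
   ([|| eI i == 0, dB a b | ((eI i).*2 == M) && XB a b] : nat))).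
set H := fun e : nat => \sum_(a : {ffun 'I_4 -> 'I_M}) \sum_(b : {ffun 'I_4 -> 'I_N})
   ([|| e == 0, dB a b | (e.*2 == M) && XB a b] : nat).
transitivity (\sum_(i : {ffun 'I_2 -> 'I_M}) H (eI i)); first by [].
rewrite sum_ffun2.
transitivity (\sum_(x : 'I_M) \sum_(e : 'I_M) H e).
  apply: eq_bigr => x _.
  have inj : injective (fun y : 'I_M => (Ordinal (ltn_pmod (x + (M - y)) hM) : 'I_M)).
    move=> y1 y2 /(congr1 val) /= E; apply: ord_inj; move: E.
    have := ltn_ord x; have := ltn_ord y1; have := ltn_ord y2.
    move: (nat_of_ord x) (nat_of_ord y1) (nat_of_ord y2) => x' u v hv hu hx.
    rewrite !(@modM2 _ M); try lia.
    by case: ifPn; case: ifPn; lia.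
  rewrite [RHS](reindex_inj inj) /=.
  apply: eq_bigr => y _; congr H.
  by rewrite /eI !ffunE.
rewrite sum_nat_const card_ord; congr (M * _).
rewrite /H exchange_big /=.
rewrite (eq_bigr (fun a => \sum_(b : {ffun 'I_4 -> 'I_N})
   ((dB a b : nat) * M + (~~ dB a b : nat) + (~~ odd M) * (
     ([&& A4 a 2 == (A4 a 0 + M./2) %% M, A4 a 3 == (A4 a 1 + M./2) %% M,
      A4 a 1 != A4 a 0 & A4 a 1 != (A4 a 0 + M./2) %% M] : nat) *
     ([&& A4 b 2 == A4 b 0, A4 b 3 == A4 b 1 & A4 b 0 != A4 b 1] : nat))))); last first.
  move=> a _; rewrite exchange_big /=; apply: eq_bigr => b _.
  rewrite (@sum_cb M hM (dB a b) (XB a b)).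
  case ev: (odd M) => /=.
    by rewrite mul0n !addn0 muln1.
  rewrite mul1n mulnb andbC.
  case hx: (XB a b).
  + have := @XB_ndB M N hM (negbT ev) a b hx; move/negbTE => ->.
    by move: hx; rewrite /XB /Xn -!andbA => ->.
  + by move: hx; rewrite /XB /Xn -!andbA => ->; rewrite !addn0 muln1.
set ap := fun a : {ffun 'I_4 -> 'I_M} => ([&& A4 a 2 == (A4 a 0 + M./2) %% M, A4 a 3 == (A4 a 1 + M./2) %% M,
      A4 a 1 != A4 a 0 & A4 a 1 != (A4 a 0 + M./2) %% M] : nat).
set bp := fun b : {ffun 'I_4 -> 'I_N} => ([&& A4 b 2 == A4 b 0, A4 b 3 == A4 b 1 & A4 b 0 != A4 b 1] : nat).
have E1 : \sum_(a : {ffun 'I_4 -> 'I_M}) \sum_(b : {ffun 'I_4 -> 'I_N}) ((dB a b : nat) * M) = M * count_delta M N 4.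
  rewrite count_delta_sum big_distrr; apply: eq_bigr => a _; rewrite big_distrr; apply: eq_bigr => b _.
  exact: mulnC.
have E3 : \sum_(a : {ffun 'I_4 -> 'I_M}) \sum_(b : {ffun 'I_4 -> 'I_N}) ((~~ odd M) * (ap a * bp b))
    = (~~ odd M) * (M * (M - 2) * (N * (N - 1))).
  case ev: (odd M) => /=.
    by rewrite big1 // => a _; rewrite big1.
  rewrite mul1n.
  rewrite (eq_bigr (fun a => ap a * \sum_(b : {ffun 'I_4 -> 'I_N}) bp b)); last first.
    by move=> a _; rewrite big_distrr; apply: eq_bigr => b _; rewrite mul1n.
  by rewrite -big_distrl /= /ap /bp sum_apart ?ev // sum_bpart.
rewrite (eq_bigr (fun a => \sum_(b : {ffun 'I_4 -> 'I_N}) ((dB a b : nat) * M) +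
   \sum_(b : {ffun 'I_4 -> 'I_N}) (~~ dB a b : nat) +
   \sum_(b : {ffun 'I_4 -> 'I_N}) ((~~ odd M) * (ap a * bp b)))); last by move=> a _; rewrite !big_split.
by rewrite !big_split /= E1 E3.
Qed.

Lemma tot M N : count_delta M N 4 +
  \sum_(a : {ffun 'I_4 -> 'I_M}) \sum_(b : {ffun 'I_4 -> 'I_N}) (~~ dB a b : nat) = M ^ 4 * N ^ 4.
Proof.
rewrite count_delta_sum -big_split /=.
rewrite (eq_bigr (fun _ => N ^ 4)).
  by rewrite sum_nat_const card_ffun !card_ord mulnC.
move=> a _; rewrite -big_split /=.
rewrite (eq_bigr (fun _ => 1)); first by rewrite sum_nat_const card_ffun !card_ord muln1.
by move=> b _; case: (dB a b).
Qed.

From mathcomp Require Import ring lra.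
Import Order.TTheory GRing.Theory Num.Theory.
Local Open Scope ring_scope.

Theorem theorem4p1 (M N : nat) (hM : (0 < M)%N) (hN : (0 < N)%N) :
  d_pr 4 2 M N =
  beta_p2 4 M N +
  (if ~~ odd M then ((M%:R - 2) * (N%:R - 1)) / ((M ^ 4 * N ^ 3)%N)%:R else 0 : rat).
Proof.
rewrite /d_pr /beta_p2 /delta_p (@count_d_eq M N hM).
have T := tot M N.
move: (\sum_(a : {ffun 'I_4 -> 'I_M}) \sum_(b : {ffun 'I_4 -> 'I_N}) (~~ dB a b : nat)) T => cn T.
move: (count_delta M N 4) T => cd T.
have eT : (cn%:R : rat) = (M ^ 4 * N ^ 4)%N%:R - cd%:R by rewrite -T natrD addrC addKr.
have M0 : (M%:R : rat) != 0 by rewrite pnatr_eq0 -lt0n.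
have N0 : (N%:R : rat) != 0 by rewrite pnatr_eq0 -lt0n.
case ev: (odd M) => /=.
- rewrite mul0n addn0 !natrM !natrD !natrM eT ?natrX.
  field.
  by rewrite M0 N0.
- have M2 : (2 <= M)%N.
    rewrite ltn_neqAle hM andbT; apply/eqP => E; by rewrite -E in ev.
  rewrite mul1n !natrM !natrD !natrM eT ?natrX !natrB // ?natrM.
  field.
  by rewrite M0 N0.
Qed.
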